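(* Under the standing assumptions, let $i,j\in I$ with $i\ne j$ and $d_X(e_i,e)\ge d_X(e_j,e)$. Then every path in $X$ from a point of $X_i$ to a point of $X_j$ meets $B(e_i;4M)$.
   Context: Standing assumptions: $X$ is a geodesic metric space with the RBP with respect to pieces $\{X_i:i\in I\}$ and constant $M>0$. Here $B(x;r)=\{z:d(x,z)<r\}$, $N_r(A)=\{z:d(z,A)\le r\}$, and RBP means: $X=\bigcup_i X_i$ and for all $i\neq j$ there is a fixed finite ordered set $I_{i,j}=\{i=i_0,i_1,\dots,i_s=j\}\subseteq I$ and points $w_r\in X_{i_r}\cap X_{i_{r+1}}$ ($0\le r<s$), forming the set $W_{i,j}$, such that every path in $X$ from $X_i$ to $X_j$ meets each $B(w_r;M)$. Moreover: a point $e\in X$ lies in exactly one piece, indexed $e\in I$ (so $X_e$); with $b=15M$, for every open ball $B$ and every $i$ with $\operatorname{diam}(B\cap X_i)\le 2b$, $X_i\setminus B$ is path-connected. For $i\ne e$, $e_i\in X_i$ is the point $w_0\in W_{i,e}$ (so every path from $X_i$ to $X_e$ meets $B(e_i;M)$); $e_e:=e$. *)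

(* Defs.v *)
From Stdlib Require Import Reals Lra List Classical ClassicalEpsilon.
Open Scope R_scope.
Set Implicit Arguments.

Definition is_metric {X : Type} (d : X -> X -> R) : Prop :=
  (forall x y, 0 <= d x y) /\
  (forall x y, d x y = 0 <-> x = y) /\
  (forall x y, d x y = d y x) /\
  (forall x y z, d x z <= d x y + d y z).

Definition geodesic {X : Type} (d : X -> X -> R) : Prop :=
  forall x y, exists g : R -> X,
    g 0 = x /\ g (d x y) = y /\
    forall s t, 0 <= s <= d x y -> 0 <= t <= d x y ->
      d (g s) (g t) = Rabs (s - t).

Definition ball {X : Type} (d : X -> X -> R) (x : X) (r : R) (z : X) : Prop :=
  d x z < r.

Definition is_path {X : Type} (d : X -> X -> R) (g : R -> X) : Prop :=
  forall t, 0 <= t <= 1 -> forall eps, 0 < eps ->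
    exists delta, 0 < delta /\
      forall s, 0 <= s <= 1 -> Rabs (s - t) < delta -> d (g t) (g s) < eps.

Definition path_meets {X : Type} (g : R -> X) (A : X -> Prop) : Prop :=
  exists t, 0 <= t <= 1 /\ A (g t).

(* RBP with respect to pieces Xs and constant M; the data chain i j = I_{i,j}
   (as an ordered list i = i_0, ..., i_s = j) and wp i j = W_{i,j}
   (the list w_0, ..., w_{s-1}) is fixed. *)
Definition RBP {X I : Type} (d : X -> X -> R) (Xs : I -> X -> Prop) (M : R)
  (chain : I -> I -> list I) (wp : I -> I -> list X) : Prop :=
  (forall x, exists i, Xs i x) /\
  forall i j, i <> j ->
    NoDup (chain i j) /\
    length (chain i j) = S (length (wp i j)) /\
    nth 0 (chain i j) i = i /\
    nth (length (wp i j)) (chain i j) i = j /\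
    forall r x0, (r < length (wp i j))%nat ->
      Xs (nth r (chain i j) i) (nth r (wp i j) x0) /\
      Xs (nth (S r) (chain i j) i) (nth r (wp i j) x0) /\
      forall g, is_path d g -> Xs i (g 0) -> Xs j (g 1) ->
        path_meets g (ball d (nth r (wp i j) x0) M).

(* The additional standing assumptions: e lies in exactly one piece, indexed eI;
   with b = 15M, for every open ball B and every piece X_i with
   diam(B ∩ X_i) <= 2b, X_i \ B is path-connected. *)
Definition standing_extra {X I : Type} (d : X -> X -> R) (Xs : I -> X -> Prop)
  (M : R) (e : X) (eI : I) : Prop :=
  Xs eI e /\ (forall k, Xs k e -> k = eI) /\
  let b := 15 * M in
  forall (x : X) (r : R) (i : I), 0 < r ->
    (forall y z, Xs i y -> ball d x r y -> Xs i z -> ball d x r z -> d y z <= 2 * b) ->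
    forall y z, Xs i y -> ~ ball d x r y -> Xs i z -> ~ ball d x r z ->
      exists g, is_path d g /\ g 0 = y /\ g 1 = z /\
        forall t, 0 <= t <= 1 -> Xs i (g t) /\ ~ ball d x r (g t).

Definition e_pt {X I : Type} (wp : I -> I -> list X) (e : X) (eI : I) (i : I) : X :=
  if excluded_middle_informative (i = eI) then e else nth 0 (wp i eI) e.

(* Main.v *)
Require Import Defs.
From Stdlib Require Import Reals List.
From Stdlib Require Import Lra Lia Classical ClassicalEpsilon.
Open Scope R_scope.

Definition cc {X : Type} (g1 g2 : R -> X) (t : R) : X :=
  if Rle_dec t (1/2) then g1 (2*t) else g2 (2*t-1).

Lemma abs_lt_intro (x a : R) : x < a -> -a < x -> Rabs x < a.
Proof. intros; apply Rabs_def1; auto. Qed.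

Lemma cc_path {X : Type} (d : X -> X -> R) (Hm : is_metric d) (g1 g2 : R -> X) :
  is_path d g1 -> is_path d g2 -> g1 1 = g2 0 -> is_path d (cc g1 g2).
Proof.
  intros P1 P2 E t Ht eps He.
  destruct Hm as [_ [_ [Hsym Htri]]].
  assert (He2: 0 < eps/2) by lra.
  destruct (Rle_dec t (1/2)) as [Ht2|Ht2].
  - destruct (P1 (2*t) ltac:(lra) _ He2) as [d1 [Hd1 H1]].
    destruct (P2 0 ltac:(lra) _ He2) as [d2 [Hd2 H2]].
    pose proof (Rmin_l d1 d2); pose proof (Rmin_r d1 d2).
    assert (0 < Rmin d1 d2) by (apply Rmin_pos; auto).
    exists (Rmin d1 d2 / 2). split; [lra|].
    intros s Hs Hst. apply Rabs_def2 in Hst. destruct Hst as [Hst1 Hst2].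
    unfold cc. destruct (Rle_dec t (1/2)); [|lra].
    destruct (Rle_dec s (1/2)).
    + apply Rlt_trans with (eps/2); [|lra]. apply H1; [lra|]. apply abs_lt_intro; lra.
    + assert (A1: d (g1 (2*t)) (g1 1) < eps/2).
      { apply H1; [lra|]. apply abs_lt_intro; lra. }
      assert (A2: d (g2 0) (g2 (2*s-1)) < eps/2).
      { apply H2; [lra|]. apply abs_lt_intro; lra. }
      rewrite E in A1.
      pose proof (Htri (g1 (2*t)) (g2 0) (g2 (2*s-1))). lra.
  - destruct (P2 (2*t-1) ltac:(lra) _ He2) as [d1 [Hd1 H1]].
    destruct (P1 1 ltac:(lra) _ He2) as [d2 [Hd2 H2]].
    pose proof (Rmin_l d1 d2); pose proof (Rmin_r d1 d2).
    assert (0 < Rmin d1 d2) by (apply Rmin_pos; auto).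
    exists (Rmin d1 d2 / 2). split; [lra|].
    intros s Hs Hst. apply Rabs_def2 in Hst. destruct Hst as [Hst1 Hst2].
    unfold cc. destruct (Rle_dec t (1/2)); [lra|].
    destruct (Rle_dec s (1/2)).
    + assert (A1: d (g2 (2*t-1)) (g2 0) < eps/2).
      { apply H1; [lra|]. apply abs_lt_intro; lra. }
      assert (A2: d (g1 1) (g1 (2*s)) < eps/2).
      { apply H2; [lra|]. apply abs_lt_intro; lra. }
      rewrite E in A2.
      pose proof (Htri (g2 (2*t-1)) (g2 0) (g1 (2*s))). lra.
    + apply Rlt_trans with (eps/2); [|lra]. apply H1; [lra|]. apply abs_lt_intro; lra.
Qed.

Lemma cc_0 {X : Type} (g1 g2 : R -> X) : cc g1 g2 0 = g1 0.
Proof. unfold cc; destruct (Rle_dec 0 (1/2)); [f_equal; ring | lra]. Qed.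

Lemma cc_1 {X : Type} (g1 g2 : R -> X) : cc g1 g2 1 = g2 1.
Proof. unfold cc; destruct (Rle_dec 1 (1/2)); [lra | f_equal; ring]. Qed.

Lemma cc_pts {X : Type} (g1 g2 : R -> X) t : 0 <= t <= 1 ->
  (exists s, 0 <= s <= 1 /\ cc g1 g2 t = g1 s) \/
  (exists s, 0 <= s <= 1 /\ cc g1 g2 t = g2 s).
Proof.
  intros Ht; unfold cc; destruct (Rle_dec t (1/2)).
  - left; exists (2*t); split; auto; lra.
  - right; exists (2*t-1); split; auto; lra.
Qed.

Lemma geo_path {X : Type} (d : X -> X -> R) (Hm : is_metric d) (Hg : geodesic d) x y :
  exists p, is_path d p /\ p 0 = x /\ p 1 = y /\
    forall t, 0 <= t <= 1 -> exists u, 0 <= u <= d x y /\ d x (p t) = u /\ d (p t) y = d x y - u.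
Proof.
  destruct (Hg x y) as [gg [G0 [G1 Gi]]].
  destruct Hm as [Hpos _].
  set (D := d x y) in *.
  assert (HD : 0 <= D) by apply Hpos.
  exists (fun t => gg (t * D)). split; [|split; [|split]].
  - intros t Ht eps He.
    set (del := eps / (D+1)).
    assert (Hdel : del * (D+1) = eps) by (unfold del; field; lra).
    assert (Hdp : 0 < del) by (unfold del; apply Rdiv_lt_0_compat; lra).
    exists del; split; auto.
    intros s Hs Hst. apply Rabs_def2 in Hst. destruct Hst.
    rewrite Gi by nra.
    apply abs_lt_intro; nra.
  - rewrite Rmult_0_l; auto.
  - rewrite Rmult_1_l; auto.
  - intros t Ht. exists (t * D). split; [nra|]. split.
    + rewrite <- G0 at 1. rewrite Gi by nra.
      rewrite Rabs_left1 by nra. ring.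
    + rewrite <- G1. rewrite Gi by nra.
      rewrite Rabs_left1 by nra. ring.
Qed.

Lemma rbp0 {X I : Type} {d : X -> X -> R} {Xs : I -> X -> Prop} {M : R}
  {chain : I -> I -> list I} {wp : I -> I -> list X} (i j : I) (x0 : X) :
  RBP d Xs M chain wp -> i <> j ->
  Xs i (nth 0 (wp i j) x0) /\ Xs j (nth 0 (wp j i) x0) /\
  (forall g, is_path d g -> Xs i (g 0) -> Xs j (g 1) ->
     path_meets g (ball d (nth 0 (wp i j) x0) M)).
Proof.
  intros [_ H] Hij.
  assert (K : forall a b, a <> b -> Xs a (nth 0 (wp a b) x0) /\
     (forall g, is_path d g -> Xs a (g 0) -> Xs b (g 1) ->
        path_meets g (ball d (nth 0 (wp a b) x0) M))).
  { intros a b Hab.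
    destruct (H a b Hab) as [_ [Hl [H0 [Hn Hall]]]].
    destruct (Nat.eq_dec (length (wp a b)) 0) as [E|E].
    - rewrite E in Hn. congruence.
    - destruct (Hall 0%nat x0 ltac:(lia)) as [A [_ C]].
      rewrite H0 in A. split; auto. }
  destruct (K i j Hij) as [A C]. destruct (K j i (not_eq_sym Hij)) as [B _].
  auto.
Qed.

Theorem lemma3p2 (X I : Type) (d : X -> X -> R) (Xs : I -> X -> Prop) (M : R)
  (chain : I -> I -> list I) (wp : I -> I -> list X) (e : X) (eI : I)
  (Hmet : is_metric d) (Hgeo : geodesic d) (HM : 0 < M)
  (Hrbp : RBP d Xs M chain wp) (Hext : standing_extra d Xs M e eI)
  (i j : I) (Hij : i <> j)
  (Hdist : d (e_pt wp e eI i) e >= d (e_pt wp e eI j) e)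
  (g : R -> X) (Hg : is_path d g) (H0 : Xs i (g 0)) (H1 : Xs j (g 1)) :
  path_meets g (ball d (e_pt wp e eI i) (4 * M)).
Proof.
  destruct Hext as [HeI [Huniq Hpc]].
  pose proof Hmet as [Hpos [Hzero [Hsym Htri]]].
  unfold e_pt in *.
  destruct (excluded_middle_informative (i = eI)) as [Hi|Hi];
  destruct (excluded_middle_informative (j = eI)) as [Hj|Hj].
  - subst; contradiction.
  - exfalso. subst i.
    assert (E0 : d e e = 0) by (apply Hzero; auto).
    pose proof (Hpos (nth 0 (wp j eI) e) e).
    assert (E1 : nth 0 (wp j eI) e = e) by (apply Hzero; lra).
    destruct (rbp0 j eI e Hrbp Hj) as [A _].
    rewrite E1 in A. apply Hj, Huniq, A.
  - subst j. destruct (rbp0 i eI e Hrbp Hi) as [_ [_ C]].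
    destruct (C g Hg H0 H1) as [t [Ht Hb]]. exists t; split; auto.
    unfold ball in *; lra.
  - set (ei := nth 0 (wp i eI) e) in *.
    set (ej := nth 0 (wp j eI) e) in *.
    destruct (rbp0 i eI e Hrbp Hi) as [Xei [_ Ci]].
    destruct (rbp0 j eI e Hrbp Hj) as [Xej _].
    destruct (Rlt_le_dec (d ei ej) (2*M)) as [Hc|Hc].
    + destruct (geo_path d Hmet Hgeo ei ej) as [p [Pp [P0 [P1 Pt]]]].
      destruct (rbp0 i j e Hrbp Hij) as [_ [_ Cij]].
      destruct (Cij p Pp ltac:(rewrite P0; auto) ltac:(rewrite P1; auto))
        as [t [Ht Hb]].
      destruct (Cij g Hg H0 H1) as [t' [Ht' Hb']].
      exists t'; split; auto. unfold ball in *.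
      destruct (Pt t Ht) as [u [Hu [Hu1 Hu2]]].
      set (w0 := nth 0 (wp i j) e) in *.
      pose proof (Htri ei (p t) (g t')).
      pose proof (Htri (p t) w0 (g t')).
      pose proof (Hsym (p t) w0).
      lra.
    + apply NNPP; intro Hno.
      assert (Far : forall t, 0 <= t <= 1 -> 4*M <= d ei (g t)).
      { intros t Ht. destruct (Rle_lt_dec (4*M) (d ei (g t))) as [|Hl]; auto.
        exfalso; apply Hno; exists t; split; auto. }
      destruct (geo_path d Hmet Hgeo ej e) as [p [Pp [P0 [P1 Pt]]]].
      assert (Hr : 0 < 2*M) by lra.
      destruct (Hpc ei (2*M) j Hr) with (y := g 1) (z := ej)
        as [h [Hh [Hh0 [Hh1 Hht]]]]; auto.
      * intros y z _ By _ Bz. unfold ball in *.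
        pose proof (Htri y ei z). pose proof (Hsym y ei). lra.
      * unfold ball. pose proof (Far 1 ltac:(lra)). lra.
      * unfold ball. lra.
      * assert (Pc : is_path d (cc g (cc h p))).
        { apply (cc_path d Hmet); auto.
          - apply (cc_path d Hmet); auto. congruence.
          - rewrite cc_0. auto. }
        destruct (Ci _ Pc) as [t [Ht Hb]].
        { rewrite cc_0; auto. }
        { rewrite cc_1, cc_1, P1; auto. }
        unfold ball in Hb. fold ei in Hb.
        destruct (cc_pts g (cc h p) t Ht) as [[s [Hs E]]|[s [Hs E]]];
          rewrite E in Hb.
        { pose proof (Far s Hs). lra. }
        destruct (cc_pts h p s Hs) as [[s' [Hs' E']]|[s' [Hs' E']]];
          rewrite E' in Hb.
        { destruct (Hht s' Hs') as [_ Hn]. apply Hn. unfold ball. lra. }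
        destruct (Pt s' Hs') as [u [Hu [Hu1 Hu2]]].
        pose proof (Htri ei (p s') e).
        pose proof (Htri ei (p s') ej).
        pose proof (Hsym (p s') ej).
        lra.
Qed.
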